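(* Let $n\ge1$, $\mathbf{A}=\{a_1,\dots,a_n\}$ and $\mathbf{S}_1^n=\{XX : X\in\mathbf{A}^*,\ X\neq\emptyset\}$. Let $X_1=a_1$, $X_i=X_{i-1}a_iX_{i-1}$ for $2\le i\le n$. Then every minimal crucial word with respect to $\mathbf{S}_1^n$ is obtained from $X_n$ by a permutation of the letters of $\mathbf{A}$; i.e. $X_n$ is the unique minimal crucial word up to renaming of letters.
   Context: A word over $\mathbf{A}$ is a finite sequence of letters; $\mathbf{A}^*$ is the set of all words. A subword is a block of consecutive letters. For $\mathbf{S}\subseteq\mathbf{A}^*$, a word is free from $\mathbf{S}$ if none of its subwords belongs to $\mathbf{S}$. A word $X$ free from $\mathbf{S}$ is crucial with respect to $\mathbf{S}$ if for every letter $a\in\mathbf{A}$ the word $Xa$ contains a subword belonging to $\mathbf{S}$. A minimal crucial word is a crucial word of smallest possible length. *)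

(* Defs.v *)
From mathcomp Require Import all_boot all_fingroup.
Set Implicit Arguments. Unset Strict Implicit. Unset Printing Implicit Defensive.

(* Words over a finite alphabet T are sequences [seq T]; a subword is a
   contiguous block, i.e. [infix]. *)

Definition is_square {T : eqType} (w : seq T) : Prop :=
  exists x : seq T, x <> [::] /\ w = x ++ x.

Definition free_from {T : eqType} (S : seq T -> Prop) (w : seq T) : Prop :=
  forall u : seq T, infix u w -> ~ S u.

Definition crucial {T : finType} (S : seq T -> Prop) (w : seq T) : Prop :=
  free_from S w /\ forall a : T, exists u : seq T, infix u (rcons w a) /\ S u.

Definition minimal_crucial {T : finType} (S : seq T -> Prop) (w : seq T) : Prop :=
  crucial S w /\ forall v : seq T, crucial S v -> size w <= size v.

(* Zimin-type words with letters coded by naturals: letter a_i is coded by i-1.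
   zimin_nat 0 = [:: 0]  (= X_1),  zimin_nat k.+1 = X ++ k.+1 :: X  (= X_{k+2}). *)
Fixpoint zimin_nat (k : nat) : seq nat :=
  match k with
  | 0 => [:: 0]
  | k'.+1 => zimin_nat k' ++ k'.+1 :: zimin_nat k'
  end.

(* X_n as a word over the alphabet 'I_n (all codes are < n when n >= 1). *)
Definition zimin (n : nat) : seq 'I_n := pmap insub (zimin_nat n.-1).

(* Main.v *)
Require Import Defs.
From mathcomp Require Import all_boot all_fingroup.
From mathcomp Require Import zify.
Set Implicit Arguments. Unset Strict Implicit. Unset Printing Implicit Defensive.


Lemma suf_uniq (T : Type) (p1 p2 t1 t2 : seq T) :
  p1 ++ t1 = p2 ++ t2 -> size t1 = size t2 -> t1 = t2.
Proof.
move=> E Hs.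
have Hp : size p1 = size p2 by have := congr1 size E; rewrite !size_cat; lia.
by rewrite -(drop_size_cat t1 (erefl (size p1))) E drop_size_cat.
Qed.

Lemma sq_idx (T : eqType) (x0 : T) (s : seq T) i m : 0 < m -> i + 2 * m <= size s ->
  (forall j, j < m -> nth x0 s (i + j) = nth x0 s (i + m + j)) ->
  exists u, infix u s /\ is_square u.
Proof.
move=> Hm Hsz Hj.
set d := drop i s.
have Hd : 2 * m <= size d by rewrite size_drop; lia.
have Hm' : m <= size d by lia.
have Hxx : take m d ++ take m d = take (2 * m) d.
  apply: (@eq_from_nth _ x0).
    rewrite size_cat !size_takel //; lia.
  move=> k; rewrite size_cat !size_takel //.
  move=> Hk; rewrite nth_cat size_takel //.
  rewrite [RHS]nth_take; last by lia.
  case: ifP => Hkm.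
    by rewrite nth_take.
  rewrite nth_take; last by lia.
  rewrite /d !nth_drop.
  have := Hj (k - m) ltac:(lia).
  have -> : i + m + (k - m) = i + k by lia.
  by [].
exists (take (2 * m) d); split.
  apply/infixP; exists (take i s), (drop (2 * m) d).
  by rewrite cat_take_drop /d cat_take_drop.
exists (take m d); split => //.
by move=> /(congr1 size); rewrite size_takel /=; lia.
Qed.

Lemma per_idx (T : eqType) (x0 : T) (x t : seq T) c i : i < size x ->
  nth x0 (x ++ c :: x ++ t) i = nth x0 (x ++ c :: x ++ t) (i + size x + 1).
Proof.
move=> Hi; rewrite !nth_cat Hi.
have -> : (i + size x + 1 < size x) = false by lia.
have -> : i + size x + 1 - size x = i.+1 by lia.
by rewrite /= nth_cat Hi.
Qed.

Lemma key (T : eqType) (W p q Z V : seq T) a b : free_from is_square W ->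
  W = p ++ Z ++ a :: Z -> W = q ++ V ++ b :: V ->
  size Z < size V -> size V <= 2 * size Z -> False.
Proof.
move=> Hf E1 E2 Hzv Hvz.
have R1 : rev W = rev Z ++ a :: rev Z ++ rev p.
  by rewrite E1 !rev_cat rev_cons cat_rcons -catA.
have R2 : rev W = rev V ++ b :: rev V ++ rev q.
  by rewrite E2 !rev_cat rev_cons cat_rcons -catA.
have HA : forall i, i < size Z -> nth a (rev W) i = nth a (rev W) (i + size Z + 1).
  by move=> i Hi; rewrite R1 -(size_rev Z) per_idx // size_rev.
have HB : forall i, i < size V -> nth a (rev W) i = nth a (rev W) (i + size V + 1).
  by move=> i Hi; rewrite R2 -(size_rev V) per_idx // size_rev.
have Hsz : size (rev W) = size q + 2 * size V + 1.
  by rewrite R2 !size_cat /= !size_cat !size_rev; lia.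
have Hj : forall j, j < size V - size Z ->
  nth a (rev W) ((size Z).+1 + j) = nth a (rev W) ((size Z).+1 + (size V - size Z) + j).
  move=> j Hj.
  have -> : (size Z).+1 + j = j + size Z + 1 by lia.
  rewrite -(HA j); last lia.
  have -> : (size Z).+1 + (size V - size Z) + j = j + size V + 1 by lia.
  by rewrite -HB //; lia.
have [u [Hu [x [Hx Ex]]]] := @sq_idx _ a (rev W) (size Z).+1 (size V - size Z)
  ltac:(lia) ltac:(lia) Hj.
apply: (Hf (rev u)); first by rewrite infix_revLR.
exists (rev x); split; last by rewrite Ex rev_cat.
by move=> Hr; apply: Hx; rewrite -(revK x) Hr.
Qed.

Lemma crucial_dec (T : finType) (W : seq T) : crucial is_square W ->
  forall a, exists p Y, W = p ++ Y ++ a :: Y.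
Proof.
case=> Hf Hc a; case: (Hc a) => u [Hi [x [Hx Hu]]].
move: Hi; rewrite infix_rconsl => /orP [Hs | Hi]; last first.
  by case: (Hf u Hi); exists x.
case/suffixP: Hs => s Es; subst u.
case/lastP: x Hx Es => [//|y c] _ Es.
rewrite -rcons_cat -rcons_cat in Es.
case/rcons_inj: Es => -> <-.
by exists s, y; rewrite cat_rcons.
Qed.

Lemma split_uniq (T : eqType) (X Y A B : seq T) c : c \notin X -> c \notin Y ->
  X ++ c :: Y = A ++ c :: B -> X = A /\ Y = B.
Proof.
move=> HX HY E.
have HA : c \notin A.
  apply/count_memPn; have := congr1 (count_mem c) E.
  rewrite !count_cat /= eqxx (count_memPn HX) (count_memPn HY); lia.
have := congr1 (index c) E; rewrite !index_cat (negbTE HX) (negbTE HA) /= eqxx !addn0 => Hs.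
by move/eqP: E; rewrite eqseq_cat // => /andP [/eqP -> /eqP [->]].
Qed.

Lemma free_mid (T : eqType) (X : seq T) c : c \notin X -> free_from is_square X ->
  free_from is_square (X ++ c :: X).
Proof.
move=> HX Hf u /infixP [s3 [s4 E]] [x [Hx Eu]]; subst u.
case Hc: (c \in x).
  have := congr1 (count_mem c) E.
  rewrite !count_cat /= eqxx (count_memPn HX).
  have : 0 < count_mem c x by rewrite -has_count has_pred1.
  lia.
case Hc3: (c \in s3).
  case/splitPr: Hc3 E => p1 p2 E.
  rewrite -catA /= in E.
  have [_ E2] := split_uniq HX HX E.
  by apply: (Hf (x ++ x)); [apply/infixP; exists p2, s4 | exists x].
case Hc4: (c \in s4).
  case/splitPr: Hc4 E => p1 p2 E.
  rewrite catA catA in E.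
  have [E2 _] := split_uniq HX HX E.
  by apply: (Hf (x ++ x)); [apply/infixP; exists s3, p1; rewrite E2 !catA | exists x].
have : c \in X ++ c :: X by rewrite mem_cat inE eqxx orbT.
by rewrite E !mem_cat Hc Hc3 Hc4.
Qed.

Lemma zimin_le k : all (fun c => c <= k) (zimin_nat k).
Proof.
elim: k => [//|k IH] /=; rewrite all_cat /= leqnn /=.
by apply/andP; split; apply: sub_all IH => c /= H; lia.
Qed.

Lemma zimin_size k : (size (zimin_nat k)).+1 = 2 ^ k.+1.
Proof.
elim: k => [//|k IH] /=; rewrite size_cat /= expnS; lia.
Qed.

Lemma zimin_suffix j k : j <= k -> exists p, zimin_nat k = p ++ zimin_nat j.
Proof.
elim: k => [|k IH] Hj.
  have -> : j = 0 by lia.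
  by exists [::].
case: (eqVneq j k.+1) => [->|Hne]; first by exists [::].
have [p Ep] := IH ltac:(lia).
exists (zimin_nat k ++ k.+1 :: p).
by rewrite /= {2}Ep -catA.
Qed.

Lemma zimin_dec j k : j <= k -> exists p Y, zimin_nat k = p ++ Y ++ j :: Y.
Proof.
move=> /zimin_suffix [p ->]; case: j => [|j].
  by exists p, [::].
by exists p, (zimin_nat j).
Qed.

Lemma pmap_insub n' s : all (fun c => c <= n') s ->
  pmap insub s = map (@inord n') s.
Proof.
elim: s => [//|c s IH] /= /andP [Hc Hs].
rewrite -IH //; case: insubP => [y _ Hy|Hn] /=.
  have Hc1 : c < n'.+1 by rewrite ltnS.
  by congr (_ :: _); apply: val_inj; rewrite /= Hy inordK.
by move: Hn; rewrite ltnS Hc.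
Qed.

Lemma zimin_free n' k : k <= n' -> free_from is_square (map (@inord n') (zimin_nat k)).
Proof.
elim: k => [|k IH] Hk.
  move=> u /size_infix Hu [x [Hx Ex]]; subst u.
  move: Hu; rewrite size_cat /=.
  case: x Hx => [//|? ?] _ /=; lia.
rewrite /= map_cat /=; apply: free_mid; last by apply: IH; lia.
apply/mapP => -[y Hy /(congr1 val)].
have := allP (zimin_le k) y Hy => /= Hyk.
rewrite !inordK; lia.
Qed.

Lemma zimin_crucial n' : crucial is_square (map (@inord n') (zimin_nat n')).
Proof.
split; first exact: zimin_free.
move=> a; have [p [Y E]] := @zimin_dec a n' (ltn_ord a).
rewrite E !map_cat /= inord_val.
exists (rcons (map inord Y) a ++ rcons (map inord Y) a); split.
  apply/infixP; exists (map inord p), [::].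
  by rewrite cats0 rcons_cat rcons_cat cat_rcons.
exists (rcons (map inord Y) a); split => //.
by move=> /(congr1 size); rewrite size_rcons.
Qed.

Definition rk (T : finType) (l : T -> nat) (a : T) := #|[set b | l b < l a]|.

Lemma rk_lt (T : finType) (l : T -> nat) a c : l a < l c -> rk l a < rk l c.
Proof.
move=> H; apply: proper_card; apply/properP; split.
  by apply/subsetP => d; rewrite !inE => Hd; apply: ltn_trans Hd H.
by exists a; rewrite !inE // ltnn.
Qed.

Lemma chain (T : finType) (l : T -> nat) : injective l ->
  (forall a b, l a < l b -> 2 * l a + 1 <= l b) ->
  forall N a c, l c < N -> l a < l c -> (l a).+1 * 2 ^ (rk l c - rk l a) <= (l c).+1.
Proof.
move=> Hinj Hdbl; elim=> [//|N IH] a c HcN Hac.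
case: (@arg_maxnP T a (fun b => l b < l c) l Hac) => b Hbc Hmax.
have Hrk : rk l c = (rk l b).+1.
  rewrite /rk.
  have -> : [set d | l d < l c] = b |: [set d | l d < l b].
    apply/setP => d; rewrite !inE.
    case: (eqVneq d b) => [->|Hdb] /=; first by rewrite Hbc.
    apply/idP/idP => Hd; last by apply: ltn_trans Hd Hbc.
    have : l d <= l b := Hmax d Hd; rewrite leq_eqVlt => /orP [/eqP Hl|//].
    by case/eqP: Hdb; apply: Hinj.
  by rewrite cardsU1 inE ltnn.
case: (eqVneq a b) => [Eab|Hab].
  subst b; rewrite Hrk subSn // subnn expn1.
  have := Hdbl a c Hac; lia.
have Hab' : l a < l b.
  have : l a <= l b := Hmax a Hac; rewrite leq_eqVlt => /orP [/eqP Hl|//].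
  by case/eqP: Hab; apply: Hinj.
have IH' := IH a b ltac:(lia) Hab'.
have Hr := rk_lt Hab'.
have -> : rk l c - rk l a = (rk l b - rk l a).+1 by lia.
rewrite expnS.
have := Hdbl b c Hbc; nia.
Qed.

Theorem mainTheorem2 (n : nat) (hn : 0 < n) (W : seq 'I_n) :
  minimal_crucial is_square W ->
  exists s : {perm 'I_n}, W = map s (zimin n).
Proof.
case: n hn W => // n' _ W [Hcru Hmin].
have Hdec := crucial_dec Hcru.
have Hfree := Hcru.1.
pose ES (a : 'I_n'.+1) (k : nat) : bool :=
  suffix (drop (size W - k) W ++ a :: drop (size W - k) W) W.
have Hex : forall a, exists k, ES a k.
  move=> a; case: (Hdec a) => p [Y E]; exists (size Y); rewrite /ES.
  have -> : drop (size W - size Y) W = Y.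
    have E' : W = (p ++ Y ++ [:: a]) ++ Y by rewrite E -!catA.
    rewrite {2}E' drop_size_cat //.
    rewrite E' !size_cat /=; lia.
  by apply/suffixP; exists p.
pose l a := xchoose (Hex a).
pose Y a := drop (size W - l a) W.
have HY : forall a, exists p, W = p ++ Y a ++ a :: Y a.
  by move=> a; apply/suffixP; exact: (xchooseP (Hex a)).
have HsY : forall a, size (Y a) = l a /\ 2 * l a + 1 <= size W.
  move=> a; case: (HY a) => p E.
  have := congr1 size E; rewrite !size_cat /= /Y size_drop; lia.
have Hinj : injective l.
  move=> a b Hab; case: (HY a) => p Ea; case: (HY b) => q Eb.
  have HYab : Y a = Y b by rewrite /Y Hab.
  rewrite catA Eb catA -HYab in Ea.
  by case: (suf_uniq Ea (erefl _)).
have Hdbl : forall a b, l a < l b -> 2 * l a + 1 <= l b.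
  move=> a b Hab; rewrite leqNgt; apply/negP => H.
  case: (HY a) => p Ea; case: (HY b) => q Eb.
  apply: (key Hfree Ea Eb); rewrite (HsY a).1 (HsY b).1; lia.
have Hch := chain Hinj Hdbl.
pose x0 : 'I_n'.+1 := ord0.
case: (@arg_maxnP _ x0 xpredT l erefl) => top _ Htop.
case: (@arg_minnP _ x0 xpredT l erefl) => bot _ Hbot.
have Hrtop : rk l top = n'.
  rewrite /rk.
  have -> : [set b | l b < l top] = [set~ top].
    apply/setP => d; rewrite !inE.
    case: (eqVneq d top) => [->|Hd]; first by rewrite ltnn.
    have : l d <= l top := Htop d erefl.
    rewrite leq_eqVlt => /orP [/eqP Hl|->//].
    by case/eqP: Hd; apply: Hinj.
  by rewrite cardsC1 card_ord.
have Hrbot : rk l bot = 0.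
  apply/eqP; rewrite cards_eq0; apply/eqP/setP => d; rewrite !inE.
  have : l bot <= l d := Hbot d erefl.
  by rewrite leqNgt => /negbTE.
have Hlow : forall a, 2 ^ (rk l a) <= (l a).+1.
  move=> a; case: (eqVneq a bot) => [->|Ha]; first by rewrite Hrbot.
  have Hl : l bot < l a.
    have : l bot <= l a := Hbot a erefl.
    rewrite leq_eqVlt => /orP [/eqP Hl|//].
    by case/eqP: Ha; apply: Hinj.
  have := Hch (l a).+1 bot a (ltnSn _) Hl; rewrite Hrbot subn0; nia.
have Hup : forall a, (l a).+1 * 2 ^ (n' - rk l a) <= (l top).+1 /\ rk l a <= n'.
  move=> a; case: (eqVneq a top) => [->|Ha]; first by rewrite Hrtop subnn muln1.
  have Hl : l a < l top.
    have : l a <= l top := Htop a erefl.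
    rewrite leq_eqVlt => /orP [/eqP Hl|//].
    by case/eqP: Ha; apply: Hinj.
  have := rk_lt Hl; rewrite Hrtop => Hr; split; last lia.
  rewrite -{1}Hrtop; exact: Hch (l top).+1 a top (ltnSn _) Hl.
have HszW : (size W).+1 <= 2 ^ n'.+1.
  have := Hmin _ (zimin_crucial n'); rewrite size_map.
  by move=> H1; rewrite -(zimin_size n') ltnS.
have Htop1 : (l top).+1 = 2 ^ n'.
  have := Hlow top; rewrite Hrtop => H1.
  have := (HsY top).2; move: HszW; rewrite expnS; lia.
have Hl : forall a, (l a).+1 = 2 ^ (rk l a).
  move=> a; apply/eqP; rewrite eqn_leq Hlow andbT.
  have [H1 H2] := Hup a.
  rewrite -(@leq_pmul2r (2 ^ (n' - rk l a))) ?expn_gt0 // -expnD subnKC //.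
  by rewrite -Htop1.
have Hrk : forall a, rk l a < n'.+1 by move=> a; rewrite ltnS; exact: (Hup a).2.
pose r a : 'I_n'.+1 := Ordinal (Hrk a).
have r_inj : injective r.
  move=> a b /(congr1 val) /= E; apply: Hinj.
  by have := Hl a; have := Hl b; rewrite E => <-; case.
pose s := ((perm r_inj)^-1)%g.
have Hs : forall k, rk l (s k) = k.
  move=> k; have : r (s k) = k by rewrite -[r _]permE permKV.
  by move/(congr1 val).
have Hls : forall k, (l (s k)).+1 = 2 ^ k by move=> k; rewrite Hl Hs.
have Y0 : Y (s (inord 0)) = [::].
  apply: size0nil; rewrite (HsY _).1.
  by have := Hls (inord 0); rewrite inordK //; case.
have Ystep : forall k, k < n' -> Y (s (inord k.+1)) =
    Y (s (inord k)) ++ s (inord k) :: Y (s (inord k)).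
  move=> k Hk; case: (HY (s (inord k))) => p Ep; case: (HY (s (inord k.+1))) => q Eq.
  rewrite Eq catA -cat_rcons in Ep.
  apply: (suf_uniq Ep); rewrite size_cat /= !(HsY _).1.
  have := Hls (inord k); have := Hls (inord k.+1).
  rewrite !inordK ?ltnS //; try lia.
  rewrite expnS; lia.
have Hind : forall k, k <= n' ->
    Y (s (inord k)) ++ s (inord k) :: Y (s (inord k)) = map (s \o inord) (zimin_nat k).
  elim=> [|k IH] Hk; first by rewrite Y0.
  rewrite (Ystep k Hk) (IH (ltnW Hk)).
  change (zimin_nat k.+1) with (zimin_nat k ++ k.+1 :: zimin_nat k).
  by rewrite map_cat.
exists s.
change (zimin n'.+1) with (pmap insub (zimin_nat n') : seq 'I_n'.+1).
rewrite pmap_insub ?zimin_le // -map_comp -(Hind n' (leqnn _)).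
case: (HY (s (inord n'))) => p Ep.
have Hp : p = [::].
  apply: size0nil.
  have := congr1 size Ep; rewrite !size_cat /= (HsY _).1.
  have := Hls (inord n'); rewrite inordK //.
  move: HszW; rewrite expnS; lia.
by rewrite Ep Hp.
Qed.
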